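(* Let $D$ be a division ring and $R$ a maximal subring of $D$ which is a left duo ring. Then $R$ is a duo ring, and either $R$ is a division ring or $R$ is an Ore $G$-domain with exactly one nonzero prime ideal, namely $M=R\setminus U(R)$. Moreover, if $R$ is not a division ring, then $R$ is a valuation ring for $D$ (for each $x\in D^*$, $x\in R$ or $x^{-1}\in R$), $Max_l(R)=Max_r(R)=Max(R)=Spec(R)\setminus\{0\}=\{M\}$, and $dRd^{-1}=R$ and $dMd^{-1}=M$ for every $d\in D^*$.
   Context: All rings are associative unital and subrings share the identity. A maximal subring of a ring $T$ is a proper subring maximal under inclusion among proper subrings of $T$. A ring is left (right) duo if every left (right) ideal is two-sided; duo means both. $U(R)$ is the unit group, $D^*=D\setminus\{0\}$; $Max_l(R)$, $Max_r(R)$, $Max(R)$, $Spec(R)$ denote the sets of maximal left ideals, maximal right ideals, maximal ideals, and prime ideals. A $G$-domain is a domain in which the intersection of all nonzero prime ideals is nonzero. *)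

(* Defs.v *)
(* D is a (possibly noncommutative) division ring, modelled as a
   unitRingType (nontrivial ring with computable inverses) in which every nonzero
   element is a unit. *)
From mathcomp Require Import all_boot all_algebra.
Set Implicit Arguments. Unset Strict Implicit. Unset Printing Implicit Defensive.
Import GRing.Theory.
Local Open Scope ring_scope.

Definition division_ringP (D : unitRingType) : Prop :=
  forall x : D, x <> 0 -> x \is a GRing.unit.

Section Defs.
Variable D : unitRingType.
Implicit Types (R S I J P A B : D -> Prop).

Definition subset_of A B : Prop := forall x, A x -> B x.
Definition seteq A B : Prop := forall x, A x <-> B x.

Definition is_subring S : Prop :=
  S 1 /\ (forall x y, S x -> S y -> S (x - y)) /\ (forall x y, S x -> S y -> S (x * y)).

Definition maximal_subring R : Prop :=
  is_subring R /\ (exists x, ~ R x) /\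
  forall S, is_subring S -> subset_of R S -> (exists x, ~ S x) -> seteq S R.

Definition additive_sub R I : Prop :=
  subset_of I R /\ I 0 /\ (forall x y, I x -> I y -> I (x - y)).
Definition left_ideal R I : Prop :=
  additive_sub R I /\ (forall r x, R r -> I x -> I (r * x)).
Definition right_ideal R I : Prop :=
  additive_sub R I /\ (forall r x, R r -> I x -> I (x * r)).
Definition ideal R I : Prop := left_ideal R I /\ right_ideal R I.

Definition left_duo R : Prop := forall I, left_ideal R I -> ideal R I.
Definition right_duo R : Prop := forall I, right_ideal R I -> ideal R I.
Definition duo R : Prop := left_duo R /\ right_duo R.

Definition unit_of R x : Prop := R x /\ exists y, R y /\ x * y = 1 /\ y * x = 1.
Definition nonunits R : D -> Prop := fun x => R x /\ ~ unit_of R x.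

Definition is_division R : Prop := forall x, R x -> x <> 0 -> unit_of R x.

Definition is_domain R : Prop :=
  forall x y, R x -> R y -> x * y = 0 -> x = 0 \/ y = 0.
Definition right_ore R : Prop :=
  forall a b, R a -> R b -> a <> 0 -> b <> 0 ->
  exists r s, R r /\ R s /\ r <> 0 /\ s <> 0 /\ a * r = b * s.
Definition left_ore R : Prop :=
  forall a b, R a -> R b -> a <> 0 -> b <> 0 ->
  exists r s, R r /\ R s /\ r <> 0 /\ s <> 0 /\ r * a = s * b.
Definition ore_domain R : Prop := is_domain R /\ left_ore R /\ right_ore R.

Definition nonzero_set I : Prop := exists x, I x /\ x <> 0.

Definition prime_ideal R P : Prop :=
  ideal R P /\ (exists x, R x /\ ~ P x) /\
  forall A B, ideal R A -> ideal R B ->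
    (forall a b, A a -> B b -> P (a * b)) -> subset_of A P \/ subset_of B P.

Definition G_domain R : Prop :=
  is_domain R /\
  exists x, R x /\ x <> 0 /\ forall P, prime_ideal R P -> nonzero_set P -> P x.

Definition maximal_left_ideal R I : Prop :=
  left_ideal R I /\ (exists x, R x /\ ~ I x) /\
  forall J, left_ideal R J -> subset_of I J -> (exists x, R x /\ ~ J x) -> seteq J I.
Definition maximal_right_ideal R I : Prop :=
  right_ideal R I /\ (exists x, R x /\ ~ I x) /\
  forall J, right_ideal R J -> subset_of I J -> (exists x, R x /\ ~ J x) -> seteq J I.
Definition maximal_ideal R I : Prop :=
  ideal R I /\ (exists x, R x /\ ~ I x) /\
  forall J, ideal R J -> subset_of I J -> (exists x, R x /\ ~ J x) -> seteq J I.

Definition conj_stable (d : D) A : Prop :=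
  forall y, A y <-> exists a, A a /\ y = d * a * d^-1.
End Defs.

(* Main.v *)
Require Import Defs.
From mathcomp Require Import all_boot all_algebra.
From Stdlib Require Import Classical.
Set Implicit Arguments. Unset Strict Implicit. Unset Printing Implicit Defensive.
Import GRing.Theory.
Local Open Scope ring_scope.

Lemma sr0 (D : unitRingType) (R : D -> Prop) : is_subring R -> R 0.
Proof. by move=> [h1 [hB hM]]; rewrite -(subrr 1); apply: hB. Qed.

Lemma srN (D : unitRingType) (R : D -> Prop) x : is_subring R -> R x -> R (- x).
Proof. move=> H hx; have h0 := sr0 H; case: H => [h1 [hB hM]].
by rewrite -sub0r; apply: hB. Qed.

Lemma srD (D : unitRingType) (R : D -> Prop) x y : is_subring R -> R x -> R y -> R (x + y).
Proof. move=> H hx hy; have hn := srN H hy; case: H => [h1 [hB hM]].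
by rewrite -(opprK y); apply: hB. Qed.

Lemma srB (D : unitRingType) (R : D -> Prop) x y : is_subring R -> R x -> R y -> R (x - y).
Proof. by move=> [h1 [hB hM]]; apply: hB. Qed.

Lemma srM (D : unitRingType) (R : D -> Prop) x y : is_subring R -> R x -> R y -> R (x * y).
Proof. by move=> [h1 [hB hM]]; apply: hM. Qed.

Lemma sr1 (D : unitRingType) (R : D -> Prop) : is_subring R -> R 1.
Proof. by case. Qed.

Lemma srX (D : unitRingType) (R : D -> Prop) x n : is_subring R -> R x -> R (x ^+ n).
Proof. move=> H hx; elim: n => [|n IH]; first by rewrite expr0; apply: sr1.
by rewrite exprS; apply: srM. Qed.

Lemma sr_sum (D : unitRingType) (R : D -> Prop) n (f : nat -> D) :
  is_subring R -> (forall i, R (f i)) -> R (\sum_(i < n) f i).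
Proof. move=> H hf; elim: n => [|n IH]; first by rewrite big_ord0; apply: sr0.
by rewrite big_ord_recr /=; apply: srD. Qed.

Lemma D_unit (D : unitRingType) (x : D) : division_ringP D -> x != 0 -> x \is a GRing.unit.
Proof. by move=> Dd /eqP; apply: Dd. Qed.

Lemma D_dom (D : unitRingType) (x y : D) : division_ringP D -> x * y = 0 -> x = 0 \/ y = 0.
Proof. move=> Dd h; case: (eqVneq x 0) => [->|hx]; first by left.
right; have u := D_unit Dd hx. by rewrite -(mulKr u y) h mulr0. Qed.

Lemma unit_ofI (D : unitRingType) (R : D -> Prop) x :
  division_ringP D -> R x -> x != 0 -> R x^-1 -> unit_of R x.
Proof. move=> Dd hx nz hi; split=> //; exists x^-1; split=> //.
have u := D_unit Dd nz; by rewrite mulrV // mulVr. Qed.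

Lemma unit_ofE (D : unitRingType) (R : D -> Prop) x :
  unit_of R x -> [/\ R x, x \is a GRing.unit & R x^-1].
Proof. move=> [hx [y [hy [e1 e2]]]].
have u : x \is a GRing.unit by apply/unitrP; exists y.
split=> //. suff -> : x^-1 = y by [].
by rewrite -[x^-1]mulr1 -e1 mulrA mulVr // mul1r. Qed.

Lemma unit_of_nz (D : unitRingType) (R : D -> Prop) x : unit_of R x -> x != 0.
Proof. move/unit_ofE=> [_ u _]; apply/eqP=> e; move: u; rewrite e.
by rewrite unitr0. Qed.

Definition Nrm (D : unitRingType) (R : D -> Prop) (x : D) :=
  x \is a GRing.unit /\ (forall r, R r -> R (x * r * x^-1)) /\ (forall r, R r -> R (x^-1 * r * x)).

Lemma NrmV (D : unitRingType) (R : D -> Prop) x : Nrm R x -> Nrm R x^-1.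
Proof. move=> [u [h1 h2]]; split; first by rewrite unitrV.
by rewrite invrK; split. Qed.

Lemma Nrm1 (D : unitRingType) (R : D -> Prop) : Nrm R 1.
Proof. split; first exact: unitr1. by rewrite invr1; split=> r; rewrite mulr1 mul1r. Qed.

Lemma NrmM (D : unitRingType) (R : D -> Prop) x y : Nrm R x -> Nrm R y -> Nrm R (x * y).
Proof. move=> [u [h1 h2]] [v [k1 k2]]; split; first by rewrite unitrMl.
rewrite invrM //; split=> r hr.
  have -> : x * y * r * (y^-1 * x^-1) = x * (y * r * y^-1) * x^-1 by rewrite !mulrA.
  by apply: h1; apply: k1.
have -> : y^-1 * x^-1 * r * (x * y) = y^-1 * (x^-1 * r * x) * y by rewrite !mulrA.
by apply: k2; apply: h2.
Qed.

Lemma NrmX (D : unitRingType) (R : D -> Prop) x n : Nrm R x -> Nrm R (x ^+ n).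
Proof. move=> h; elim: n => [|n IH]; first by rewrite expr0; apply: Nrm1.
by rewrite exprS; apply: NrmM. Qed.

Inductive Span (D : unitRingType) (C : D -> Prop) (x : D) (k : nat) : D -> Prop :=
| Span0 : Span C x k 0
| SpanS i r y : C r -> (i <= k)%N -> Span C x k y -> Span C x k (r * x ^+ i + y).

Lemma Span_add (D : unitRingType) (C : D -> Prop) x k y z :
  Span C x k y -> Span C x k z -> Span C x k (y + z).
Proof. elim=> [|i r y' hr hi hy IH] hz; first by rewrite add0r.
by rewrite -addrA; apply: SpanS => //; apply: IH. Qed.

Lemma Span_opp (D : unitRingType) (C : D -> Prop) x k y :
  (forall r, C r -> C (- r)) -> Span C x k y -> Span C x k (- y).
Proof. move=> hN; elim=> [|i r y' hr hi hy IH]; first by rewrite oppr0; apply: Span0.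
by rewrite opprD -mulNr; apply: SpanS => //; apply: hN. Qed.

Lemma Span_mono (D : unitRingType) (C : D -> Prop) x k k' y :
  (k <= k')%N -> Span C x k y -> Span C x k' y.
Proof. move=> hk; elim=> [|i r y' hr hi hy IH]; first exact: Span0.
by apply: SpanS => //; apply: leq_trans hk. Qed.

Lemma Span_lmul (D : unitRingType) (C C' : D -> Prop) x k y a :
  (forall r, C r -> C' (a * r)) -> Span C x k y -> Span C' x k (a * y).
Proof. move=> hC; elim=> [|i r y' hr hi hy IH]; first by rewrite mulr0; apply: Span0.
by rewrite mulrDr mulrA; apply: SpanS => //; apply: hC. Qed.

Lemma Span_shift (D : unitRingType) (C : D -> Prop) x k y :
  x \is a GRing.unit -> (forall r, C r -> C (x * r * x^-1)) ->
  Span C x k y -> Span C x k.+1 (x * y).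
Proof. move=> u hC; elim=> [|i r y' hr hi hy IH]; first by rewrite mulr0; apply: Span0.
have -> : x * (r * x ^+ i + y') = (x * r * x^-1) * x ^+ i.+1 + x * y'.
  by rewrite mulrDr exprS !mulrA mulrVK.
by apply: SpanS => //; apply: hC. Qed.

Lemma Span_shiftn (D : unitRingType) (C : D -> Prop) x k y n :
  x \is a GRing.unit -> (forall r, C r -> C (x * r * x^-1)) ->
  Span C x k y -> Span C x (n + k) (x ^+ n * y).
Proof. move=> u hC hy; elim: n => [|n IH]; first by rewrite expr0 mul1r.
by rewrite exprS -mulrA addSn; apply: Span_shift. Qed.

Lemma Span_mul (D : unitRingType) (C : D -> Prop) x k l y z :
  x \is a GRing.unit -> (forall r, C r -> C (x * r * x^-1)) ->
  (forall r s, C r -> C s -> C (r * s)) ->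
  Span C x k y -> Span C x l z -> Span C x (k + l) (y * z).
Proof. move=> u hC hM; elim=> [|i r y' hr hi hy IH] hz; first by rewrite mul0r; apply: Span0.
rewrite mulrDl; apply: Span_add; last exact: IH.
rewrite -mulrA; apply: (@Span_lmul _ C) => [s hs|]; first exact: hM.
apply: (@Span_mono _ _ _ (i + l)); first by rewrite leq_add2r.
exact: Span_shiftn. Qed.

Lemma Span_C0 (D : unitRingType) (C : D -> Prop) x y :
  C 0 -> (forall r s, C r -> C s -> C (r + s)) -> Span C x 0 y -> C y.
Proof. move=> h0 hD; elim=> [|i r y' hr hi hy IH] //.
by move: hi; rewrite leqn0 => /eqP ->; rewrite expr0 mulr1; apply: hD. Qed.

Lemma expr_inv_l (D : unitRingType) (x : D) i n : x \is a GRing.unit -> (i <= n)%N ->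
  x^-1 ^+ i * x ^+ n = x ^+ (n - i).
Proof. move=> u hi; have -> : x ^+ n = x ^+ i * x ^+ (n - i) by rewrite -exprD subnKC.
by rewrite mulrA exprVn mulVr ?mul1r //; apply: unitrX. Qed.

Lemma expr_inv_r (D : unitRingType) (x : D) i n : x \is a GRing.unit -> (i <= n)%N ->
  x ^+ i * x^-1 ^+ n = x^-1 ^+ (n - i).
Proof. move=> u hi; rewrite -{1}(invrK x) expr_inv_l //; by rewrite unitrV. Qed.

Lemma Span_in_R (D : unitRingType) (C R : D -> Prop) x k y :
  is_subring R -> (forall r, C r -> R r) -> x \is a GRing.unit -> R x^-1 ->
  Span C x k y -> R (y * x^-1 ^+ k).
Proof. move=> H hCR u hi; elim=> [|i r y' hr hik hy IH]; first by rewrite mul0r; apply: sr0.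
rewrite mulrDl; apply: srD => //; rewrite -mulrA expr_inv_r //.
by apply: srM => //; [apply: hCR | apply: srX]. Qed.

Lemma Span_top (D : unitRingType) (C : D -> Prop) x k y :
  C 0 -> (forall r s, C r -> C s -> C (r + s)) ->
  Span C x k.+1 y -> exists y' r, [/\ Span C x k y', C r & y = y' + r * x ^+ k.+1].
Proof. move=> h0 hD; elim=> [|i r y' hr hik hy [y'' [r' [h1 h2 e]]]].
  by exists 0, 0; split=> //; [apply: Span0 | rewrite mul0r addr0].
case: (eqVneq i k.+1) => [ei|ni].
  exists y'', (r + r'); split=> //; first exact: hD.
  by rewrite e ei mulrDl addrCA.
exists (r * x ^+ i + y''), r'; split=> //; last by rewrite e addrA.
by apply: SpanS => //; rewrite -ltnS ltn_neqAle ni hik.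
Qed.

Lemma Span_bot (D : unitRingType) (C : D -> Prop) x k y :
  x \is a GRing.unit -> C 0 -> (forall r s, C r -> C s -> C (r + s)) ->
  Span C x^-1 k.+1 y -> exists v z, [/\ C v, Span C x k z & y * x ^+ k.+1 = v * x ^+ k.+1 + z].
Proof. move=> u h0 hD; elim=> [|i r y' hr hik hy [v [z [h1 h2 e]]]].
  by exists 0, 0; split=> //; [apply: Span0 | rewrite !mul0r addr0].
rewrite mulrDl e -mulrA expr_inv_l //.
case: i hik => [|i] hik.
  exists (r + v), z; split=> //; first exact: hD.
  by rewrite subn0 mulrDl addrA.
exists v, (r * x ^+ (k.+1 - i.+1) + z); split=> //; last by rewrite addrCA.
by apply: SpanS => //; rewrite subSS leq_subr.
Qed.

Lemma Span1 (D : unitRingType) (C : D -> Prop) x k i r :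
  C r -> (i <= k)%N -> Span C x k (r * x ^+ i).
Proof. by move=> hr hi; rewrite -[X in Span _ _ _ X]addr0; apply: SpanS => //; apply: Span0. Qed.

Definition Poly (D : unitRingType) (R : D -> Prop) x y := exists k, Span R x k y.

Lemma Poly_subring (D : unitRingType) (R : D -> Prop) x :
  is_subring R -> x \is a GRing.unit -> (forall r, R r -> R (x * r * x^-1)) ->
  is_subring (Poly R x).
Proof. move=> H u hC; split.
  by exists 0%N; have := @Span1 _ R x 0 0 1 (sr1 H) (leqnn 0); rewrite expr0 mulr1.
split.
  move=> a b [k ha] [l hb]; exists (maxn k l); apply: Span_add.
    by apply: Span_mono ha; rewrite leq_maxl.
  apply: Span_opp; first by move=> r; apply: srN.
  by apply: Span_mono hb; rewrite leq_maxr.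
move=> a b [k ha] [l hb]; exists (k + l)%N; apply: Span_mul => //.
by move=> r s; apply: srM.
Qed.

Lemma Poly_R (D : unitRingType) (R : D -> Prop) x r : R r -> Poly R x r.
Proof. by move=> hr; exists 0%N; have := @Span1 _ R x 0 0 r hr (leqnn 0); rewrite expr0 mulr1. Qed.

Lemma Poly_x (D : unitRingType) (R : D -> Prop) x : is_subring R -> Poly R x x.
Proof. by move=> H; exists 1%N; have := @Span1 _ R x 1 1 1 (sr1 H) (leqnn 1); rewrite expr1 mul1r. Qed.

Lemma Poly_all (D : unitRingType) (R : D -> Prop) x :
  maximal_subring R -> Nrm R x -> ~ R x -> forall d, Poly R x d.
Proof. move=> [H [_ hmax]] [u [h1 h2]] nx d; apply: NNPP => nd.
have := hmax (Poly R x) (Poly_subring H u h1) (fun r => @Poly_R _ _ x r) (ex_intro _ d nd).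
by move=> /(_ x) [/(_ (Poly_x x H))]. Qed.

Lemma nrm_R (D : unitRingType) (R : D -> Prop) y :
  division_ringP D -> maximal_subring R -> left_duo R -> R y -> y != 0 -> Nrm R y.
Proof. move=> Dd [H [[d nd] hmax]] HL hy nz; have u := D_unit Dd nz.
have h1 : forall r, R r -> R (y * r * y^-1).
  move=> r hr; pose I := fun z => exists s, R s /\ z = s * y.
  have hI : left_ideal R I.
    split; [split; [|split]|].
    - by move=> z [s [hs ->]]; apply: srM.
    - by exists 0; split; [apply: sr0 | rewrite mul0r].
    - by move=> a b [s [hs ->]] [t [ht ->]]; exists (s - t); split; [apply: srB | rewrite mulrBl].
    - by move=> a b ha [s [hs ->]]; exists (a * s); split; [apply: srM | rewrite mulrA].
  have [_ [_ hr']] := HL I hI.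
  have [s [hs e]] : I (y * r) by apply: hr' => //; exists 1; split; [apply: sr1 | rewrite mul1r].
  by rewrite e mulrK.
split=> //; split=> // r hr.
pose T := fun z => R (y * z * y^-1).
have HT : is_subring T.
  split; first by rewrite /T mulr1 mulrV //; apply: sr1.
  split=> a b ha hb; rewrite /T.
    by rewrite mulrBr mulrBl; apply: srB.
  have -> : y * (a * b) * y^-1 = (y * a * y^-1) * (y * b * y^-1) by rewrite !mulrA mulrVK.
  exact: srM.
have hRT : subset_of R T by move=> z hz; apply: h1.
have hp : exists z, ~ T z.
  by exists (y^-1 * d * y); rewrite /T !mulrA mulrV // mul1r mulrK.
have := hmax T HT hRT hp (y^-1 * r * y); rewrite /T.
by rewrite !mulrA mulrV // mul1r mulrK //; case=> hh _; apply: hh.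
Qed.

Lemma M_R (D : unitRingType) (R : D -> Prop) m : nonunits R m -> R m.
Proof. by case. Qed.

Lemma notM_unit (D : unitRingType) (R : D -> Prop) y : R y -> ~ nonunits R y -> unit_of R y.
Proof. by move=> hy nm; apply: NNPP => nu; apply: nm. Qed.

Lemma M0 (D : unitRingType) (R : D -> Prop) : is_subring R -> nonunits R 0.
Proof. move=> H; split; first exact: sr0.
by move/unit_of_nz; rewrite eqxx. Qed.

Lemma M_not1 (D : unitRingType) (R : D -> Prop) : is_subring R -> ~ nonunits R 1.
Proof. move=> H [_ nu]; apply: nu; split; first exact: sr1.
by exists 1; split; [exact: sr1 | rewrite mulr1]. Qed.

Lemma nz_of_unit (D : unitRingType) (x : D) : x \is a GRing.unit -> x != 0.
Proof. by move=> u; apply/eqP=> e; move: u; rewrite e unitr0. Qed.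

Lemma M_lmul (D : unitRingType) (R : D -> Prop) r m :
  division_ringP D -> is_subring R -> R r -> nonunits R m -> nonunits R (r * m).
Proof. move=> Dd H hr [hm nu]; split; first exact: srM.
move/unit_ofE=> [_ u hi]; apply: nu.
have nr : r != 0 by apply/eqP=> e; move: u; rewrite e mul0r unitr0.
have nm : m != 0 by apply/eqP=> e; move: u; rewrite e mulr0 unitr0.
have ur := D_unit Dd nr; have um := D_unit Dd nm.
apply: unit_ofI => //; have -> : m^-1 = (r * m)^-1 * r by rewrite invrM // mulrVK.
exact: srM. Qed.

Lemma M_rmul (D : unitRingType) (R : D -> Prop) r m :
  division_ringP D -> is_subring R -> R r -> nonunits R m -> nonunits R (m * r).
Proof. move=> Dd H hr [hm nu]; split; first exact: srM.
move/unit_ofE=> [_ u hi]; apply: nu.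
have nr : r != 0 by apply/eqP=> e; move: u; rewrite e mulr0 unitr0.
have nm : m != 0 by apply/eqP=> e; move: u; rewrite e mul0r unitr0.
have ur := D_unit Dd nr; have um := D_unit Dd nm.
apply: unit_ofI => //; have -> : m^-1 = r * (m * r)^-1 by rewrite invrM // mulVKr.
exact: srM. Qed.

Lemma M_conj (D : unitRingType) (R : D -> Prop) x m :
  Nrm R x -> nonunits R m -> nonunits R (x * m * x^-1).
Proof. move=> [u [h1 h2]] [hm nu]; split; first exact: h1.
move=> [_ [y [hy [e1 e2]]]]; apply: nu; split=> //; exists (x^-1 * y * x); split; first exact: h2.
split.
  have -> : m * (x^-1 * y * x) = x^-1 * ((x * m * x^-1) * y) * x by rewrite !mulrA mulVr // mul1r.
  by rewrite e1 mulr1 mulVr.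
have -> : x^-1 * y * x * m = x^-1 * (y * (x * m * x^-1)) * x by rewrite !mulrA mulrVK.
by rewrite e2 mulr1 mulVr.
Qed.

Lemma unit_nonM (D : unitRingType) (R : D -> Prop) u : unit_of R u -> ~ nonunits R u.
Proof. by move=> hu [_ nu]; apply: nu. Qed.

Lemma local1 (D : unitRingType) (R : D -> Prop) y :
  division_ringP D -> maximal_subring R -> left_duo R ->
  nonunits R y -> nonunits R (1 - y) -> False.
Proof. move=> Dd HM HL hy h1y; have H := HM.1.
have nz : y != 0.
  apply/eqP=> e; move: h1y; rewrite e subr0; exact: (M_not1 H).
have n1 : 1 - y != 0.
  apply/eqP=> e; move: hy; have -> : y = 1 by apply/eqP; rewrite -subr_eq0 -opprB e oppr0.
  exact: (M_not1 H).
have u := D_unit Dd nz; have u1 := D_unit Dd n1.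
have Ny := nrm_R Dd HM HL hy.1 nz.
have nyi : ~ R y^-1 by move=> hi; case: (hy) => hRy nu; apply: nu; exact: unit_ofI.
have [k hk] := Poly_all HM (NrmV Ny) nyi (1 - y)^-1.
have uyi : y^-1 \is a GRing.unit by rewrite unitrV.
have Ri : R (y^-1)^-1 by rewrite invrK; exact hy.1.
have hR := Span_in_R H (fun r h => h) uyi Ri hk.
rewrite invrK in hR.
case: h1y => _ nu; apply: nu; apply: unit_ofI => //; first exact: (srB H (sr1 H) hy.1).
have -> : (1 - y)^-1 = \sum_(i < k) y ^+ i + (1 - y)^-1 * y ^+ k.
  have e : (1 - y) * \sum_(i < k) y ^+ i = 1 - y ^+ k.
    by rewrite -opprB mulNr -subrX1 opprB.
  by rewrite -(mulKr u1 (\sum_(i < k) y ^+ i)) e -mulrDr subrK mulr1.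
apply: srD => //; apply: sr_sum => // i; exact: srX hy.1.
Qed.

Lemma M_add (D : unitRingType) (R : D -> Prop) y z :
  division_ringP D -> maximal_subring R -> left_duo R ->
  nonunits R y -> nonunits R z -> nonunits R (y + z).
Proof. move=> Dd HM HL hy hz; have H := HM.1; apply: NNPP => n.
have [_ u hi] := unit_ofE (notM_unit (srD H hy.1 hz.1) n).
set w := (y + z)^-1 in hi.
have e : w * y + w * z = 1 by rewrite -mulrDr mulVr.
apply: (local1 Dd HM HL (M_lmul Dd H hi hy)).
have -> : 1 - w * y = w * z by rewrite -e [w * y + _]addrC addrK.
exact: M_lmul.
Qed.

Lemma M_opp (D : unitRingType) (R : D -> Prop) m :
  division_ringP D -> is_subring R -> nonunits R m -> nonunits R (- m).
Proof. move=> Dd H hm; rewrite -mulN1r; apply: M_lmul => //; apply: srN => //; exact: sr1. Qed.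

Lemma one_sub_unit (D : unitRingType) (R : D -> Prop) v :
  division_ringP D -> maximal_subring R -> left_duo R ->
  nonunits R v -> unit_of R (1 - v).
Proof. move=> Dd HM HL hv; have H := HM.1; apply: notM_unit; first exact: (srB H (sr1 H) hv.1).
move=> h; apply: (M_not1 H); have -> : (1 : D) = (1 - v) + v by rewrite subrK.
exact: M_add. Qed.

Lemma Span_M0 (D : unitRingType) (R : D -> Prop) x :
  division_ringP D -> maximal_subring R -> left_duo R ->
  Span (nonunits R) x 0 1 -> False.
Proof. move=> Dd HM HL h; apply: (M_not1 HM.1); apply: Span_C0 h; first exact: M0 HM.1.
by move=> r s; apply: M_add. Qed.

Lemma red (D : unitRingType) (R : D -> Prop) x m n :
  division_ringP D -> maximal_subring R -> left_duo R -> Nrm R x ->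
  Span (nonunits R) x m.+1 1 -> Span (nonunits R) x^-1 n.+1 1 -> (n <= m)%N ->
  Span (nonunits R) x m 1.
Proof. move=> Dd HM HL Nx h1 h2 hnm; have H := HM.1; have u := Nx.1.
have hM0 := M0 H; have hMD : forall r s, nonunits R r -> nonunits R s -> nonunits R (r + s).
  by move=> r s; apply: M_add.
have [v [z [hv hz e]]] := Span_bot u hM0 hMD h2.
have [_ u1 hc] := unit_ofE (one_sub_unit Dd HM HL hv).
have ex : x ^+ n.+1 = (1 - v)^-1 * z.
  have ez : z = (1 - v) * x ^+ n.+1 by rewrite mulrBl e addrC addKr.
  by rewrite ez mulKr.
have hcz : Span (nonunits R) x n ((1 - v)^-1 * z).
  by apply: Span_lmul hz => s hs; apply: M_lmul.
have hs := Span_shiftn (m - n) u (fun r hr => M_conj Nx hr) hcz.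
rewrite subnK // -ex -exprD addnS subnK // in hs.
have [y' [r [hy' hr e1]]] := Span_top hM0 hMD h1.
rewrite e1; apply: Span_add => //.
by apply: Span_lmul hs => s hs'; apply: M_lmul => //; exact: hr.1.
Qed.

Lemma contra (D : unitRingType) (R : D -> Prop) :
  division_ringP D -> maximal_subring R -> left_duo R ->
  forall N m n x, (m + n <= N)%N -> Nrm R x ->
  Span (nonunits R) x m 1 -> Span (nonunits R) x^-1 n 1 -> False.
Proof. move=> Dd HM HL N; elim: N => [|N IH] m n x hN Nx h1 h2.
  by move: hN; rewrite leqn0 addn_eq0 => /andP [/eqP em _]; rewrite em in h1; apply: Span_M0 h1.
case: m hN h1 => [|m] hN h1; first exact: Span_M0 h1.
case: n hN h2 => [|n] hN h2; first exact: Span_M0 h2.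
case: (leqP n m) => hnm.
  have hN' : (m + n.+1 <= N)%N by rewrite addSn ltnS in hN.
  exact: (IH m n.+1 x hN' Nx (red Dd HM HL Nx h1 h2 hnm) h2).
have h1' : Span (nonunits R) (x^-1)^-1 m.+1 1 by rewrite invrK.
have h2' := red Dd HM HL (NrmV Nx) h2 h1' (ltnW hnm).
have hN' : (m.+1 + n <= N)%N by rewrite addnS ltnS in hN.
exact: (IH m.+1 n x hN' Nx h1 h2').
Qed.

Lemma nondiv_elt (D : unitRingType) (R : D -> Prop) :
  ~ is_division R -> exists a, [/\ R a, a != 0 & ~ unit_of R a].
Proof. move=> nd; apply: NNPP => hn; apply: nd => y hy ny; apply: NNPP => nu; apply: hn.
by exists y; split=> //; apply/eqP. Qed.

Lemma valuation (D : unitRingType) (R : D -> Prop) x :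
  division_ringP D -> maximal_subring R -> left_duo R -> ~ is_division R ->
  x != 0 -> R x \/ R x^-1.
Proof. move=> Dd HM HL nd nzx; have H := HM.1.
have [a [ha na nua]] := nondiv_elt nd.
have hM : nonunits R a by [].
have ua := D_unit Dd na; have Na := nrm_R Dd HM HL ha na.
have nai : ~ R a^-1 by move=> hi; apply: nua; exact: unit_ofI.
apply: NNPP => hn.
have nx : ~ R x by move=> h; apply: hn; left.
have nxi : ~ R x^-1 by move=> h; apply: hn; right.
have [k hk] := Poly_all HM (NrmV Na) nai x.
have uai : a^-1 \is a GRing.unit by rewrite unitrV.
have Rai : R (a^-1)^-1 by rewrite invrK.
have hs := Span_in_R H (fun r h => h) uai Rai hk; rewrite invrK in hs.
have ux := D_unit Dd nzx.
have us : x * a ^+ k \is a GRing.unit by rewrite unitrMl //; apply: unitrX.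
have Ns := nrm_R Dd HM HL hs (nz_of_unit us).
have ex : x = (x * a ^+ k) * a^-1 ^+ k by rewrite exprVn mulrK //; apply: unitrX.
have Nx : Nrm R x by rewrite ex; apply: NrmM Ns (NrmX k (NrmV Na)).
have [m hm] := Poly_all HM Nx nx a^-1.
have [n hn'] := Poly_all HM (NrmV Nx) nxi a^-1.
have h1 : Span (nonunits R) x m 1.
  rewrite -(mulrV ua); apply: Span_lmul hm => r hr; exact: M_rmul.
have h2 : Span (nonunits R) x^-1 n 1.
  rewrite -(mulrV ua); apply: Span_lmul hn' => r hr; exact: M_rmul.
exact: (contra Dd HM HL (leqnn (m + n)) Nx h1 h2).
Qed.

Lemma Nrm_all (D : unitRingType) (R : D -> Prop) x :
  division_ringP D -> maximal_subring R -> left_duo R -> ~ is_division R ->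
  x != 0 -> Nrm R x.
Proof. move=> Dd HM HL nd nzx; case: (valuation Dd HM HL nd nzx) => h.
  exact: nrm_R.
rewrite -(invrK x); apply: NrmV; apply: nrm_R => //; by rewrite invr_eq0. Qed.

Lemma M_ideal (D : unitRingType) (R : D -> Prop) :
  division_ringP D -> maximal_subring R -> left_duo R -> ideal R (nonunits R).
Proof. move=> Dd HM HL; have H := HM.1.
have ha : additive_sub R (nonunits R).
  split; first by move=> z; case.
  split; first exact: M0.
  by move=> y z hy hz; apply: M_add => //; apply: M_opp.
split; split=> // r z hr hz; [exact: M_lmul | exact: M_rmul].
Qed.

Lemma left_proper_subM (D : unitRingType) (R I : D -> Prop) :
  is_subring R -> left_ideal R I -> (exists x, R x /\ ~ I x) -> subset_of I (nonunits R).
Proof. move=> H [[hIR [hI0 hIB]] hIl] [x0 [hx0 nx0]] z hz; split; first exact: hIR.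
move=> [_ [w [hw [_ e]]]]; apply: nx0; rewrite -[x0]mulr1 -e mulrA; exact: hIl (srM H hx0 hw) hz.
Qed.

Lemma right_proper_subM (D : unitRingType) (R I : D -> Prop) :
  is_subring R -> right_ideal R I -> (exists x, R x /\ ~ I x) -> subset_of I (nonunits R).
Proof. move=> H [[hIR [hI0 hIB]] hIr] [x0 [hx0 nx0]] z hz; split; first exact: hIR.
move=> [_ [w [hw [e _]]]]; apply: nx0; rewrite -[x0]mul1r -e -mulrA; exact: hIr (srM H hw hx0) hz.
Qed.

Lemma max_gen (D : unitRingType) (R M : D -> Prop) (K : (D -> Prop) -> Prop) :
  K M -> (exists x, R x /\ ~ M x) ->
  (forall I, K I -> (exists x, R x /\ ~ I x) -> subset_of I M) ->
  (K M /\ (exists x, R x /\ ~ M x) /\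
    forall J, K J -> subset_of M J -> (exists x, R x /\ ~ J x) -> seteq J M) /\
  (forall I, (K I /\ (exists x, R x /\ ~ I x) /\
    forall J, K J -> subset_of I J -> (exists x, R x /\ ~ J x) -> seteq J I) -> seteq I M).
Proof. move=> KM pM hsub; split.
  split=> //; split=> // J KJ hMJ pJ y; split; [exact: hsub | exact: hMJ].
move=> I [KI [pI hI]] y; have hIM := hsub I KI pI.
have := hI M KM hIM pM y; tauto.
Qed.

Lemma principal (D : unitRingType) (R : D -> Prop) c :
  is_subring R -> R c -> Nrm R c -> ideal R (fun z => exists r, R r /\ z = r * c).
Proof. move=> H hc [u [h1 h2]].
have ha : additive_sub R (fun z => exists r, R r /\ z = r * c).
  split; first by move=> z [s [hs ->]]; apply: srM.
  split; first by exists 0; split; [apply: sr0 | rewrite mul0r].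
  by move=> a b [s [hs ->]] [t [ht ->]]; exists (s - t); split; [apply: srB | rewrite mulrBl].
split; split=> //.
  by move=> a b ha' [s [hs ->]]; exists (a * s); split; [apply: srM | rewrite mulrA].
move=> a b ha' [s [hs ->]]; exists (s * (c * a * c^-1)); split; first by apply: srM => //; apply: h1.
by rewrite !mulrA mulrVK.
Qed.

Lemma M_prime (D : unitRingType) (R : D -> Prop) :
  division_ringP D -> maximal_subring R -> left_duo R -> prime_ideal R (nonunits R).
Proof. move=> Dd HM HL; have H := HM.1; split; first exact: M_ideal.
split; first by exists 1; split; [apply: sr1 | apply: M_not1].
move=> A B hA hB hAB; apply: NNPP => hn.
have [a na] : exists a, ~ (A a -> nonunits R a).
  by apply: not_all_ex_not => h; apply: hn; left.
have [b nb] : exists b, ~ (B b -> nonunits R b).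
  by apply: not_all_ex_not => h; apply: hn; right.
have [Aa nMa] := imply_to_and _ _ na; have [Bb nMb] := imply_to_and _ _ nb.
have [Ra ua Rai] := unit_ofE (notM_unit (hA.1.1.1 a Aa) nMa).
have [Rb ub Rbi] := unit_ofE (notM_unit (hB.1.1.1 b Bb) nMb).
have [_ nu] := hAB a b Aa Bb; apply: nu; apply: unit_ofI => //.
- exact: srM.
- by apply: nz_of_unit; rewrite unitrMl.
- by rewrite invrM //; apply: srM.
Qed.

Lemma pow_prime (D : unitRingType) (R P : D -> Prop) m :
  division_ringP D -> maximal_subring R -> left_duo R -> prime_ideal R P ->
  subset_of P (nonunits R) -> nonunits R m -> m != 0 ->
  forall k, P (m ^+ k) -> P m.
Proof. move=> Dd HM HL hP hPM hm nz; have H := HM.1.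
have Nm := nrm_R Dd HM HL hm.1 nz.
case=> [|k]; first by rewrite expr0 => /hPM h; exfalso; exact: (M_not1 H h).
elim: k => [|k IH]; first by rewrite expr1.
move=> hk.
have [[[_ [_ _]] hPl] _] := hP.1.
have NA := NrmX k.+1 Nm; have RA := srX k.+1 H hm.1.
have := hP.2.2 _ _ (principal H RA NA) (principal H hm.1 Nm).
case.
- move=> a b [r [hr ->]] [s [hs ->]].
  have -> : r * m ^+ k.+1 * (s * m) = (r * (m ^+ k.+1 * s * (m ^+ k.+1)^-1)) * m ^+ k.+2.
    have e2 : m ^+ k.+2 = m ^+ k.+1 * m by rewrite [in LHS]exprSr.
    by rewrite e2 !mulrA mulrVK //; apply: NA.1.
  apply: hPl hk; apply: srM => //; exact: NA.2.1.
- move=> h; apply: IH; apply: h; exists 1; split; [exact: sr1 | by rewrite mul1r].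
- move=> h; apply: h; exists 1; split; [exact: sr1 | by rewrite mul1r].
Qed.

Lemma prime_unique (D : unitRingType) (R P : D -> Prop) :
  division_ringP D -> maximal_subring R -> left_duo R -> prime_ideal R P ->
  nonzero_set P -> seteq P (nonunits R).
Proof. move=> Dd HM HL hP [p [hp np]]; have H := HM.1.
have hPM := left_proper_subM H hP.1.1 hP.2.1.
move=> m; split; first exact: hPM.
move=> hm; case: (eqVneq m 0) => [->|nz]; first exact: hP.1.1.1.2.1.
have Nm := nrm_R Dd HM HL hm.1 nz.
have nmi : ~ R m^-1 by move=> hi; case: (hm) => hRm nu; apply: nu; exact: unit_ofI.
have nzp : p != 0 by apply/eqP.
have up := D_unit Dd nzp; have um := D_unit Dd nz.
have [k hk] := Poly_all HM (NrmV Nm) nmi p^-1.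
have umi : m^-1 \is a GRing.unit by rewrite unitrV.
have Rmi : R (m^-1)^-1 by rewrite invrK; exact: hm.1.
have hs := Span_in_R H (fun r h => h) umi Rmi hk; rewrite invrK in hs.
apply: (pow_prime Dd HM HL hP hPM hm nz (k := k)).
rewrite -(mulVKr up (m ^+ k)); exact: hP.1.2.2 _ _ hs hp.
Qed.

Lemma right_duo_R (D : unitRingType) (R : D -> Prop) :
  division_ringP D -> maximal_subring R -> left_duo R -> right_duo R.
Proof. move=> Dd HM HL I hI; split=> //; split; first exact: hI.1.
move=> r z hr hz; case: (eqVneq z 0) => [->|nz]; first by rewrite mulr0; exact: hI.1.2.1.
have Nz := nrm_R Dd HM HL (hI.1.1 z hz) nz.
have -> : r * z = z * (z^-1 * r * z) by rewrite !mulrA mulrV ?mul1r //; exact: Nz.1.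
apply: hI.2 hz; exact: Nz.2.2.
Qed.

Lemma conj_st (D : unitRingType) (A : D -> Prop) d :
  d \is a GRing.unit -> (forall a, A a -> A (d * a * d^-1)) -> (forall a, A a -> A (d^-1 * a * d)) ->
  conj_stable d A.
Proof. move=> u h1 h2 y; split.
  move=> hy; exists (d^-1 * y * d); split; first exact: h2.
  by rewrite !mulrA mulrV // mul1r mulrK.
by move=> [a [ha ->]]; apply: h1.
Qed.

Unset Implicit Arguments.

Theorem proposition3p2 (D : unitRingType) (R : D -> Prop) :
  division_ringP D -> maximal_subring R -> left_duo R ->
  duo R /\
  (is_division R \/
   (ore_domain R /\ G_domain R /\
    prime_ideal R (nonunits R) /\ nonzero_set (nonunits R) /\
    (forall P, prime_ideal R P -> nonzero_set P -> seteq P (nonunits R)))) /\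
  (~ is_division R ->
   (forall x : D, x <> 0 -> R x \/ R x^-1) /\
   (maximal_left_ideal R (nonunits R) /\
    forall I, maximal_left_ideal R I -> seteq I (nonunits R)) /\
   (maximal_right_ideal R (nonunits R) /\
    forall I, maximal_right_ideal R I -> seteq I (nonunits R)) /\
   (maximal_ideal R (nonunits R) /\
    forall I, maximal_ideal R I -> seteq I (nonunits R)) /\
   (prime_ideal R (nonunits R) /\ nonzero_set (nonunits R) /\
    forall P, prime_ideal R P -> nonzero_set P -> seteq P (nonunits R)) /\
   (forall d : D, d <> 0 ->
      conj_stable d R /\ conj_stable d (nonunits R))).
Proof.
move=> Dd HM HL; have H := HM.1.
have hduo : duo R := conj HL (right_duo_R Dd HM HL).
have hdom : is_domain R by move=> x y _ _; apply: D_dom.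
case: (classic (is_division R)) => hdiv.
  by split=> //; split; [left | move=> h; exfalso; apply: h].
have [a [ha na nua]] := nondiv_elt hdiv.
have hMa : nonunits R a by [].
have Mne : nonzero_set (nonunits R) by exists a; split => //; apply/eqP.
have Mpr := M_prime Dd HM HL.
have Muniq : forall P, prime_ideal R P -> nonzero_set P -> seteq P (nonunits R).
  by move=> P hP hz; apply: prime_unique.
have hore : ore_domain R.
  split=> //; split.
  - move=> x y hx hy nx ny.
    have Ny := nrm_R Dd HM HL hy (introN eqP ny).
    have ux := D_unit Dd (introN eqP nx); have uy := Ny.1.
    exists y, (y * x * y^-1); split=> //; split; first exact: Ny.2.1.
    split=> //; split; last by rewrite mulrVK.
    by apply/eqP; apply: nz_of_unit; rewrite !unitrMl // unitrV.
  - move=> x y hx hy nx ny.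
    have Nx := nrm_R Dd HM HL hx (introN eqP nx).
    have uy := D_unit Dd (introN eqP ny); have ux := Nx.1.
    exists (x^-1 * y * x), x; split; first exact: Nx.2.2.
    split=> //; split; first by apply/eqP; apply: nz_of_unit; rewrite !unitrMl // unitrV.
    by split=> //; rewrite !mulrA mulrV // mul1r.
have hG : G_domain R.
  split=> //; exists a; split=> //; split; first exact/eqP.
  by move=> P hP hz; apply/(Muniq P hP hz).
split=> //; split; first by right.
move=> _; split; first by move=> x nx; apply: valuation => //; apply/eqP.
have Mid := M_ideal Dd HM HL.
have pM : exists x, R x /\ ~ nonunits R x by exists 1; split; [exact: sr1 | exact: M_not1].
split; first exact: (max_gen (K := left_ideal R) Mid.1 pM (fun I hI hp => left_proper_subM H hI hp)).
split; first exact: (max_gen (K := right_ideal R) Mid.2 pM (fun I hI hp => right_proper_subM H hI hp)).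
split; first exact: (max_gen (K := ideal R) Mid pM (fun I hI hp => left_proper_subM H hI.1 hp)).
split; first by split.
move=> d nd; have Nd := Nrm_all Dd HM HL hdiv (introN eqP nd); split.
  exact: (conj_st Nd.1 Nd.2.1 Nd.2.2).
apply: (conj_st Nd.1) => m hm; first exact: M_conj.
by have := M_conj (NrmV Nd) hm; rewrite invrK.
Qed.
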